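(* Let $A$ be a balanced parenthesis sequence inducing the ordered matching $M$. Then $(A)$ is a balanced parenthesis sequence; let $M'$ be the matching it induces and let $|M'|$ denote the number of vertices of $M'$. Then $$r_<(M',K_3)\le r_<(M,K_3)+|M'|+1.$$
   Context: An ordered graph on $[N]$ is a graph with vertex set $\{1,\dots,N\}$ equipped with the natural order. Given a red/blue coloring of the edges of the complete graph on $[N]$, a red (ordered) copy of an ordered graph $G$ on $[p]$ is a strictly increasing map $\varphi:[p]\to[N]$ such that $\varphi(u)\varphi(v)$ is red for every edge $uv$ of $G$. The ordered Ramsey number $r_<(G,K_3)$ is the smallest $N$ such that every red/blue coloring of the edges of the complete graph on $[N]$ contains either a red ordered copy of $G$ or a blue triangle. A balanced parenthesis sequence of length $2m$ is a correctly matched string of $m$ open and $m$ close parentheses (possibly empty); it induces the ordered matching on $[2m]$ whose edges are the pairs $\{i,j\}$ such that the parenthesis at position $i$ is an open parenthesis matched with the close parenthesis at position $j$. *)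

(* Defs.v *)
From mathcomp Require Import all_boot.
Set Implicit Arguments.
Unset Strict Implicit.
Unset Printing Implicit Defensive.

(* A parenthesis sequence: true = '(' (open), false = ')' (close). *)

Definition balanced (s : seq bool) : bool :=
  [forall k : 'I_(size s).+1,
      count (fun b => ~~ b) (take k s) <= count id (take k s)]
  && (count id s == count (fun b => ~~ b) s).

Definition paren_wrap (s : seq bool) : seq bool := true :: rcons s false.

Definition matched (s : seq bool) (i j : nat) : bool :=
  [&& i < j, j < size s, nth false s i, ~~ nth false s j &
      balanced (take (j - i.+1) (drop i.+1 s))].

Definition matching_graph (s : seq bool) : rel 'I_(size s) :=
  fun u v => matched s u v || matched s v u.

Arguments matching_graph s : clear implicits.

(* An edge colouring of the complete graph on [N]: col x y for x < y is
   true for red, false for blue (values on other pairs are irrelevant). *)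
Definition red_copy (p : nat) (G : rel 'I_p) (N : nat)
    (col : 'I_N -> 'I_N -> bool) : Prop :=
  exists phi : 'I_p -> 'I_N,
    (forall u v : 'I_p, u < v -> phi u < phi v) /\
    (forall u v : 'I_p, u < v -> G u v -> col (phi u) (phi v)).

Definition blue_triangle (N : nat) (col : 'I_N -> 'I_N -> bool) : Prop :=
  exists a b c : 'I_N,
    [/\ a < b, b < c, ~~ col a b, ~~ col b c & ~~ col a c].

Definition arrows (p : nat) (G : rel 'I_p) (N : nat) : Prop :=
  forall col : 'I_N -> 'I_N -> bool, red_copy G col \/ blue_triangle col.

Definition is_ordered_ramsey_K3 (p : nat) (G : rel 'I_p) (N : nat) : Prop :=
  arrows G N /\ forall N', arrows G N' -> N <= N'.

(* Main.v *)
Require Import Defs.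
From mathcomp Require Import all_boot zify.
From Stdlib Require Import Classical.
Set Implicit Arguments.
Unset Strict Implicit.

Lemma balanced_wrap A : balanced A -> balanced (paren_wrap A).
Proof.
move=> /andP[/forallP H /eqP E]; apply/andP; split.
  apply/forallP => -[k hk] /=.
  case: k hk => [|k] hk //=.
  rewrite /= size_rcons in hk.
  have [kq|kq] := leqP k (size A).
    rewrite -cats1 takel_cat //.
    have := H (Ordinal (kq : k < (size A).+1)) => /=; lia.
  have -> : k = size (rcons A false) by rewrite size_rcons; lia.
  rewrite take_size -cats1 !count_cat /=; lia.
by rewrite /= -cats1 !count_cat /=; lia.
Qed.

Lemma wrap_inner A u v : u < size A -> v < size A ->
  matched (paren_wrap A) u.+1 v.+1 = matched A u v.
Proof.
move=> hu hv; rewrite /matched /paren_wrap /= size_rcons !ltnS (ltnW hv) hv.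
have hu1 : u.+1 <= size A by [].
rewrite !nth_rcons hu hv subSS (drop_rcons hu1) -cats1.
case: (ltnP u v) => //= uv.
by rewrite takel_cat // size_drop; lia.
Qed.

Lemma wrap_0 A v : balanced A -> 0 < v -> v <= size A ->
  ~~ matched (paren_wrap A) 0 v.
Proof.
move=> /andP[/forallP H _]; case: v => // v _ hv.
apply/negP; rewrite /matched /paren_wrap /= size_rcons nth_rcons hv subn1 /= drop0.
move=> /and3P[_ hn /andP[_ /eqP E]].
rewrite -cats1 takel_cat in E; last by apply: ltnW.
have := H (Ordinal (hv : v.+1 < (size A).+1)); rewrite /= (take_nth false hv) -cats1 !count_cat /=.
move: hn; case: (nth false A v) => //= _; lia.
Qed.

Lemma least_exists (P : nat -> Prop) L : P L -> exists n, P n /\ forall m, P m -> n <= m.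
Proof.
elim: L {-2}L (leqnn L) => [|L IH] m hm Pm.
  exists m; split => // k _; move: hm; rewrite leqn0 => /eqP ->; by [].
case: (classic (exists k, k < m /\ P k)) => [[k [km Pk]]|nok].
  by apply: (IH k) => //; lia.
exists m; split => // k Pk; rewrite leqNgt; apply/negP => km; apply: nok; by exists k.
Qed.

Lemma pick_inc n (P : pred nat) k : k <= count P (iota 0 n) ->
  exists g : nat -> nat, (forall i j, i < j -> j < k -> g i < g j) /\
    (forall i, i < k -> g i < n /\ P (g i)).
Proof.
move=> hk; pose S := filter P (iota 0 n).
have szS : size S = count P (iota 0 n) by rewrite size_filter.
have sS : sorted ltn S := sorted_filter ltn_trans _ (iota_ltn_sorted 0 n).
exists (nth 0 S); split.
  move=> i j ij jk; apply: (sorted_ltn_nth ltn_trans 0 sS) => //; rewrite inE; lia.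
move=> i ik; have : nth 0 S i \in S by apply: mem_nth; rewrite szS; lia.
by rewrite mem_filter mem_iota => /andP[Pi /andP[_ lt]]; split => //; lia.
Qed.

Definition extn q m (f : 'I_q -> 'I_m) (i : nat) : nat :=
  if insub i is Some x then val (f x) else 0.

Lemma extnE q m (f : 'I_q -> 'I_m) i (hi : i < q) : extn f i = f (Ordinal hi).
Proof.
change (extn f (nat_of_ord (Ordinal hi)) = f (Ordinal hi)).
by rewrite /extn valK.
Qed.

Lemma key A N n : balanced A -> arrows (matching_graph A) N ->
  n = N + size (paren_wrap A) -> arrows (matching_graph (paren_wrap A)) n.+1.
Proof.
move=> bA arrN hn col.
have hp : size (paren_wrap A) = (size A).+2 by rewrite /= size_rcons.
pose w := @ord_max n.
have inordE : forall x, x <= n -> nat_of_ord (inord x : 'I_n.+1) = x.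
  by move=> x hx; rewrite inordK.
have wE : inord n = w by apply: val_inj; rewrite /= inordK.
have := count_predC (fun i => col (inord i) w) (iota 0 n); rewrite size_iota => BR.
case: (leqP (size (paren_wrap A)) (count (predC (fun i => col (inord i) w)) (iota 0 n))) => hB.
  have [g [ginc gP]] := pick_inc hB.
  case: (boolP [exists i : 'I_(size (paren_wrap A)), exists j : 'I_(size (paren_wrap A)),
           (i < j) && ~~ col (inord (g i)) (inord (g j))]).
    move=> /existsP[i /existsP[j /andP[ij bl]]]; right.
    have [gi Pi] := gP i (ltn_ord i). have [gj Pj] := gP j (ltn_ord j).
    exists (inord (g i)), (inord (g j)), w; split => //.
      by rewrite !inordE; [exact: ginc| lia | lia].
    by rewrite inordE; [exact: gj|lia].
  move=> /existsPn H; left; exists (fun i => inord (g i)); split.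
    move=> u v uv; have [gu _] := gP u (ltn_ord u); have [gv _] := gP v (ltn_ord v).
    by rewrite !inordE; [exact: ginc|lia|lia].
  by move=> u v uv _; have /existsPn/(_ v) := H u; rewrite uv negbK.
have hR : N.+1 <= count (fun i => col (inord i) w) (iota 0 n) by lia.
have [g [ginc gP]] := pick_inc hR.
pose h (i : 'I_N) : 'I_n.+1 := inord (g i.+1).
have hE : forall i : 'I_N, nat_of_ord (h i) = g i.+1.
  move=> i; rewrite /h inordE //; have [] := gP i.+1 (ltn_ord i); lia.
case: (arrN (fun i j => col (h i) (h j))) => [[psi [psiinc psired]]|[a [b [c [ab bc nab nbc nac]]]]]; last first.
  right; exists (h a), (h b), (h c); split => //; rewrite !hE; apply: ginc => //; have := ltn_ord c; lia.
left.
pose q := size A.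
pose f u := if u == 0 then g 0 else if u <= q then g (extn psi u.-1).+1 else n.
have exlt : forall i, i < q -> extn psi i < N.
  by move=> i hi; rewrite (extnE psi hi).
have exinc : forall i j, i < j -> j < q -> extn psi i < extn psi j.
  move=> i j ij jq; have hi : i < q by lia.
  by rewrite (extnE psi hi) (extnE psi jq); exact: psiinc.
have fin : forall u, 0 < u -> u <= q -> f u = g (extn psi u.-1).+1.
  move=> u u0 uq; rewrite /f uq; case: u u0 {uq} => //.
have flast : f q.+1 = n by rewrite /f /= ltnn.
have fle : forall u, f u <= n.
  move=> u; rewrite /f; case: ifP => u0.
    by have [] := gP 0 (ltn0Sn _); lia.
  case: ifP => // uq; move/negbT: u0 => u0; have [] := gP (extn psi u.-1).+1 _; first by have := exlt u.-1; lia.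
  lia.
have finc : forall u v, u < v -> v < q.+2 -> f u < f v.
  move=> u v uv vq.
  have [u0|upos] := posnP u.
    have [vle|vgt] := leqP v q.
      rewrite (fin v); try lia.
      rewrite u0 /f /=; apply: ginc => //; have := exlt v.-1; lia.
    have -> : v = q.+1 by lia.
    rewrite flast u0 /f /=; by have [] := gP 0 (ltn0Sn _).
  have uq : u <= q by lia.
  rewrite (fin u) //.
  have [vle|vgt] := leqP v q.
    rewrite (fin v); try lia.
    apply: ginc; first by have := exinc u.-1 v.-1; lia.
    have := exlt v.-1; lia.
  have -> : v = q.+1 by lia.
  rewrite flast; have [] := gP (extn psi u.-1).+1 _ => //; have := exlt u.-1; lia.
exists (fun u : 'I_(size (paren_wrap A)) => inord (f u)); split.
  move=> u v uv; rewrite !inordE ?fle //; apply: finc => //; rewrite -hp; exact: ltn_ord.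
move=> u v uv; rewrite /matching_graph.
have -> : matched (paren_wrap A) v u = false by rewrite /matched ltnNge ltnW.
rewrite orbF => m.
have vq : v < q.+2 by rewrite /q -hp.
have [u0|upos] := posnP u.
  have [vle|vgt] := leqP v q.
    by move: m; rewrite u0 (negbTE (wrap_0 bA _ vle)) //; lia.
  have vE : nat_of_ord v = q.+1 by lia.
  rewrite u0 vE flast wE /f /=; by have [] := gP 0 (ltn0Sn _).
have uq : u <= q by lia.
have hu : u.-1 < q by lia.
rewrite (fin u) // (extnE psi hu).
have [vle|vgt] := leqP v q.
  have hv : v.-1 < q by lia.
  have m' : matched A u.-1 v.-1 by rewrite -wrap_inner // !prednK //; lia.
  have := psired (Ordinal hu) (Ordinal hv) _ _.
  rewrite (fin v); try lia; rewrite (extnE psi hv); apply.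
    by change (u.-1 < v.-1); lia.
  by apply/orP; left; exact: m'.
have vE : nat_of_ord v = q.+1 by lia.
rewrite vE flast wE; by have [] := gP (psi (Ordinal hu)).+1 (ltn_ord _).
Qed.

Theorem lemma2p5 (A : seq bool) :
  balanced A ->
  balanced (paren_wrap A) /\
  forall N : nat,
    is_ordered_ramsey_K3 (matching_graph A) N ->
    exists N' : nat,
      is_ordered_ramsey_K3 (matching_graph (paren_wrap A)) N' /\
      N' <= N + size (paren_wrap A) + 1.
Proof.
move=> bA; split; first exact: balanced_wrap.
move=> N [arrN _].
have arr' : arrows (matching_graph (paren_wrap A)) (N + size (paren_wrap A) + 1).
  by rewrite addn1; apply: (key bA arrN).
have [N' [H1 H2]] := least_exists arr'.
by exists N'; split; [split | exact: H2].
Qed.
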